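(* Let $\omega$ be a primitive third root of unity and $\mathcal{C}=\mathbb{C}\langle x,y,z\rangle/(x^2,y^2,z^2,\ zxy+\omega xyz+\omega^2 yzx,\ zxy+\omega^2 xyz+\omega yzx)$. Then the element $g_0=zxy+xyz+yzx$ of $\mathcal{C}$ satisfies $g_0x=xg_0=g_0y=yg_0=g_0z=zg_0=0$. *)

(* Defs.v *)
From HB Require Import structures.
From mathcomp Require Import all_boot all_order all_algebra.
From mathcomp Require Import complex.
From mathcomp Require Import Rstruct.
From Stdlib Require Import Rdefinitions.
Set Implicit Arguments. Unset Strict Implicit. Unset Printing Implicit Defensive.
Import Order.TTheory GRing.Theory Num.Theory.
Local Open Scope ring_scope.

Notation CC := (complex Rdefinitions.R).

(* Letters: 0 = x, 1 = y, 2 = z.  Words are sequences of letters. *)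
Definition word := seq 'I_3.

(* A noncommutative polynomial, written as a finite formal sum of
   (coefficient, word) terms. *)
Definition ncpoly := seq (CC * word).

(* Coefficient of a word in a formal sum: this defines the element of the
   free algebra C<x,y,z> that the formal sum denotes. *)
Definition nccoef (p : ncpoly) (w : word) : CC :=
  \sum_(t <- p | t.2 == w) t.1.

Definition nceq (p q : ncpoly) : Prop := forall w, nccoef p w = nccoef q w.

Definition ncadd (p q : ncpoly) : ncpoly := p ++ q.
Definition ncmul (p q : ncpoly) : ncpoly :=
  [seq (a.1 * b.1, a.2 ++ b.2) | a <- p, b <- q].
Definition ncscale (c : CC) (p : ncpoly) : ncpoly := [seq (c * a.1, a.2) | a <- p].

Definition ncX : ncpoly := [:: (1, [:: (0 : 'I_3)])].
Definition ncY : ncpoly := [:: (1, [:: (1 : 'I_3)])].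
Definition ncZ : ncpoly := [:: (1, [:: (2 : 'I_3)])].

Definition in_ideal (rels : seq ncpoly) (p : ncpoly) : Prop :=
  exists l : seq (ncpoly * nat * ncpoly),
    nceq p (flatten [seq ncmul (ncmul t.1.1 (nth [::] rels t.1.2)) t.2 | t <- l]).

Definition zero_in_quot (rels : seq ncpoly) (p : ncpoly) : Prop := in_ideal rels p.

Definition rels_C (w : CC) : seq ncpoly :=
  [:: ncmul ncX ncX; ncmul ncY ncY; ncmul ncZ ncZ;
      ncadd (ncmul ncZ (ncmul ncX ncY))
        (ncadd (ncscale w (ncmul ncX (ncmul ncY ncZ)))
               (ncscale (w ^+ 2) (ncmul ncY (ncmul ncZ ncX))));
      ncadd (ncmul ncZ (ncmul ncX ncY))
        (ncadd (ncscale (w ^+ 2) (ncmul ncX (ncmul ncY ncZ)))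
               (ncscale w (ncmul ncY (ncmul ncZ ncX))))].

Definition g0 : ncpoly :=
  ncadd (ncmul ncZ (ncmul ncX ncY))
    (ncadd (ncmul ncX (ncmul ncY ncZ)) (ncmul ncY (ncmul ncZ ncX))).

(* Main.v *)
Require Import Defs.
From mathcomp Require Import all_boot all_order all_algebra.
From mathcomp Require Import complex Rstruct.
From mathcomp Require Import ring.
Import GRing.Theory.
Local Open Scope ring_scope.

Lemma nccoef_cons t p u : nccoef (t :: p) u = (if t.2 == u then t.1 else 0) + nccoef p u.
Proof. by rewrite /nccoef big_cons; case: ifP; rewrite ?add0r. Qed.
Lemma nccoef_nil u : nccoef [::] u = 0.
Proof. by rewrite /nccoef big_nil. Qed.

Definition sc (c : CC) : ncpoly := [:: (c, [::])].

Lemma wfacts (w : CC) : 3.-primitive_root w -> w ^+ 2 = - 1 - w /\ w ^+ 2 + w + 1 = 0.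
Proof.
move=> hw.
have h3 : w ^+ 3 = 1 by exact: prim_expr_order.
have h1 : w != 1.
  have := prim_order_dvd hw 1. rewrite expr1 => <-. by [].
have : (w - 1) * (w ^+ 2 + w + 1) = 0.
  have -> : (w - 1) * (w ^+ 2 + w + 1) = w ^+ 3 - 1 by ring.
  by rewrite h3 subrr.
move/eqP; rewrite mulf_eq0 subr_eq0 (negbTE h1) /= => /eqP e.
split => //. apply/eqP; rewrite -subr_eq0; apply/eqP; rewrite -e; ring.
Qed.

Ltac splitw u := repeat match goal with
 | |- context[?v == u] => let H := fresh in case: (eqVneq v u) => [H|H];
     [subst u | rewrite ?(negbTE H)]; rewrite /= end.

Ltac fin1 w h k := transitivity ((k : CC) * (w ^+ 2 + w + 1)); [ring | by rewrite h mulr0].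
Ltac fin w h := apply: subr0_eq;
  first [fin1 w h (0 : CC) | fin1 w h (1 : CC) | fin1 w h (@GRing.opp CC 1) | fin1 w h (2 : CC) | fin1 w h (@GRing.opp CC 2)
        | fin1 w h (3 : CC) | fin1 w h (@GRing.opp CC 3) | fin1 w h (4 : CC) | fin1 w h (@GRing.opp CC 4)| fin1 w h (6 : CC) | fin1 w h (@GRing.opp CC 6)].

Ltac solve_it w e h l :=
  exists l; let u := fresh "u" in intro u; rewrite /rels_C e /= /ncmul /ncadd /ncscale /g0 /ncX /ncY /ncZ /sc /=;
  rewrite ?nccoef_cons nccoef_nil /=; splitw u; fin w h.

Theorem mainTheorem19 (w : CC) (hw : 3.-primitive_root w) :
  let I := rels_C w in
  zero_in_quot I (ncmul g0 ncX) /\ zero_in_quot I (ncmul ncX g0) /\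
  zero_in_quot I (ncmul g0 ncY) /\ zero_in_quot I (ncmul ncY g0) /\
  zero_in_quot I (ncmul g0 ncZ) /\ zero_in_quot I (ncmul ncZ g0).
Proof.
have [e h] := wfacts w hw.
move=> I; rewrite /I /zero_in_quot /in_ideal.
split; [| split; [| split; [| split; [| split]]]].
- solve_it w e h [:: (ncscale 3%:R (ncmul ncY ncZ), 0%N, sc 1);
                   (sc (- w), 3%N, ncX); (sc (1 + w), 4%N, ncX)].

- solve_it w e h [:: (sc 3%:R, 0%N, ncmul ncY ncZ);
                   (ncscale (1 + w) ncX, 3%N, sc 1); (ncscale (- w) ncX, 4%N, sc 1)].
- solve_it w e h [:: (ncscale 3%:R (ncmul ncZ ncX), 1%N, sc 1);
                   (sc (-1), 3%N, ncY); (sc (-1), 4%N, ncY)].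
- solve_it w e h [:: (sc 3%:R, 1%N, ncmul ncZ ncX);
                   (ncscale (- w) ncY, 3%N, sc 1); (ncscale (1 + w) ncY, 4%N, sc 1)].
- solve_it w e h [:: (ncscale 3%:R (ncmul ncX ncY), 2%N, sc 1);
                   (sc (1 + w), 3%N, ncZ); (sc (- w), 4%N, ncZ)].
- solve_it w e h [:: (sc 3%:R, 2%N, ncmul ncX ncY);
                   (ncscale (-1) ncZ, 3%N, sc 1); (ncscale (-1) ncZ, 4%N, sc 1)].
Qed.
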